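(* Let $G$ be a 3-regular graph on $n$ vertices and $k$ a positive integer. For every $\delta$ with $\frac{2\log2}{k}\le\delta<n$, let $\eta=\frac{n}{\sqrt{n+\delta}}$. If $x\in\mathbb{R}^n$ satisfies $\|x\|_2=1$ and $\|x\|_1\le\eta$, then $p_G(x)\le\mathrm{MaxCut}(G)\le\mathrm{Opt}(G)$. Consequently, with $\mathcal{T}_\delta=\{x\in\mathbb{R}^n:\|x\|_2=1,\ \|x\|_1\ge\eta\}$, one has $\mathrm{Opt}(G)=\max_{x\in\mathcal{T}_\delta}p_G(x)$.
   Context: Let $A$ be the adjacency matrix of $G$ and $Q_G=\frac12\big(I-\frac13A\big)$. Define $\mathrm{MaxCut}(G)=\max_{x\in\{\pm1/\sqrt n\}^n}x^TQ_Gx$, $p_G(x)=(x^TQ_Gx)\prod_{i=1}^n(nx_i^2)^k$ for $x\in\mathbb{R}^n$, and $\mathrm{Opt}(G)=\max_{\|x\|_2=1}p_G(x)$. *)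

(* Defs.v *)
From mathcomp Require Import all_boot all_order all_algebra.
From mathcomp Require Import all_classical all_reals all_analysis.
Set Implicit Arguments. Unset Strict Implicit. Unset Printing Implicit Defensive.
Import Order.TTheory GRing.Theory Num.Theory.
Local Open Scope ring_scope.
Local Open Scope classical_set_scope.

Section Defs.
Variables (R : realType) (n : nat).

Definition simple_graph (e : rel 'I_n) : Prop :=
  (forall i j, e i j = e j i) /\ (forall i, ~~ e i i).

Definition regular (d : nat) (e : rel 'I_n) : Prop :=
  forall i, #|[set j | e i j]| = d.

Definition adjmx (e : rel 'I_n) : 'M[R]_n := \matrix_(i, j) (e i j)%:R.

Definition QG (e : rel 'I_n) : 'M[R]_n := 2^-1 *: (1%:M - 3^-1 *: adjmx e).

Definition qform (M : 'M[R]_n) (x : 'cV[R]_n) : R := (x^T *m M *m x) 0 0.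

Definition norm2 (x : 'cV[R]_n) : R := Num.sqrt (\sum_i x i 0 ^+ 2).
Definition norm1 (x : 'cV[R]_n) : R := \sum_i `|x i 0|.

Definition signvec (s : {ffun 'I_n -> bool}) : 'cV[R]_n :=
  \col_i ((if s i then 1 else -1) / Num.sqrt n%:R).

Definition MaxCut (e : rel 'I_n) : R :=
  \big[Num.max/qform (QG e) (signvec [ffun=> true])]_(s : {ffun 'I_n -> bool})
     qform (QG e) (signvec s).

Definition pG (k : nat) (e : rel 'I_n) (x : 'cV[R]_n) : R :=
  qform (QG e) x * \prod_i (n%:R * x i 0 ^+ 2) ^+ k.

(* Opt(G) = max over the unit sphere of p_G (supremum; the sphere is compact) *)
Definition Opt (k : nat) (e : rel 'I_n) : R :=
  sup [set pG k e x | x in [set x : 'cV[R]_n | norm2 x = 1]].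

End Defs.

(* Main.v *)
Require Import Defs.
From mathcomp Require Import all_boot all_order all_algebra.
From mathcomp Require Import all_classical all_reals all_analysis.
Import Order.TTheory GRing.Theory Num.Theory.
From mathcomp Require Import ring lra.
Import numFieldTopology.Exports numFieldNormedType.Exports.
Local Open Scope classical_set_scope.
Local Open Scope ring_scope.

Lemma qformE (R : realType) n (M : 'M[R]_n) (x : 'cV[R]_n) :
  qform M x = \sum_i \sum_j x i 0 * M i j * x j 0.
Proof.
rewrite /qform mxE exchange_big /=; apply: eq_bigr => j _.
rewrite mxE mulr_suml; apply: eq_bigr => i _; rewrite mxE.
by [].
Qed.

Lemma QGE (R : realType) n (e : rel 'I_n) i j :
  QG R e i j = 2^-1 * ((i == j)%:R - 3^-1 * (e i j)%:R).
Proof. by rewrite /QG !mxE. Qed.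

Lemma qformQG (R : realType) n (e : rel 'I_n) (x : 'cV[R]_n) :
  qform (QG R e) x = 2^-1 * (\sum_i x i 0 ^+ 2
     - 3^-1 * \sum_i \sum_j (e i j)%:R * x i 0 * x j 0).
Proof.
have h1 : \sum_i x i 0 ^+ 2 = \sum_i \sum_j (i==j)%:R * x i 0 * x j 0.
  apply: eq_bigr => i _; rewrite (bigD1 i) //= big1 ?addr0 ?eqxx ?mul1r ?expr2 //.
  by move=> j /negbTE; rewrite eq_sym => ->; rewrite !mul0r.
rewrite h1 qformE.
rewrite [X in _ - X]mulr_sumr -sumrB mulr_sumr; apply: eq_bigr => i _.
rewrite [X in _ - X]mulr_sumr -sumrB mulr_sumr; apply: eq_bigr => j _.
rewrite QGE; ring.
Qed.

Lemma deg_sum (R : realType) n (e : rel 'I_n) i :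
  regular 3 e -> \sum_j (e i j)%:R = 3 :> R.
Proof.
move=> reg; rewrite -natr_sum.
have -> : (\sum_j (e i j : nat) = #|[set j | e i j]|)%N.
  rewrite -sum1_card [RHS]big_mkcond /=; apply: eq_bigr => j _.
  case: (boolP (e i j)) => h; first by rewrite mem_set.
  by rewrite memNset //= (negbTE h).
by rewrite reg.
Qed.

Lemma adj_lb (R : realType) n (e : rel 'I_n) (y : 'I_n -> R) :
  simple_graph e -> regular 3 e ->
  - 3 * \sum_i y i ^+ 2 <= \sum_i \sum_j (e i j)%:R * y i * y j.
Proof.
move=> [esym _] reg.
set T := \sum_i \sum_j _.
have H0 : 0 <= \sum_i \sum_j (e i j)%:R * (y i + y j) ^+ 2.
  by apply: sumr_ge0 => i _; apply: sumr_ge0 => j _; apply: mulr_ge0 => //; apply: sqr_ge0.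
have H1 : \sum_i \sum_j (e i j)%:R * (y i + y j) ^+ 2 =
   \sum_i \sum_j (e i j)%:R * y i ^+ 2 + \sum_i \sum_j (e i j)%:R * y j ^+ 2 + 2 * T.
  rewrite /T mulr_sumr -!big_split /=; apply: eq_bigr => i _.
  rewrite mulr_sumr -!big_split /=; apply: eq_bigr => j _; ring.
have H2 : \sum_i \sum_j (e i j)%:R * y i ^+ 2 = 3 * \sum_i y i ^+ 2 :> R.
  rewrite mulr_sumr; apply: eq_bigr => i _.
  by rewrite -mulr_suml deg_sum // mulrC.
have H3 : \sum_i \sum_j (e i j)%:R * y j ^+ 2 = 3 * \sum_i y i ^+ 2 :> R.
  rewrite exchange_big /= mulr_sumr; apply: eq_bigr => j _.
  rewrite -mulr_suml -(@deg_sum R _ _ j reg); congr (_ * _); apply: eq_bigr => i _.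
  by rewrite esym.
rewrite H1 H2 H3 in H0.
lra.
Qed.

Lemma qform_le (R : realType) n (e : rel 'I_n) (x : 'cV[R]_n) :
  simple_graph e -> regular 3 e ->
  qform (QG R e) x <= \sum_i x i 0 ^+ 2.
Proof.
move=> sg reg; rewrite qformQG.
have := @adj_lb R _ _ (fun i => x i 0) sg reg; lra.
Qed.

Definition sg (R : realType) (b : bool) : R := if b then 1 else -1.

Lemma signvecE (R : realType) n (s : {ffun 'I_n -> bool}) i :
  signvec R s i 0 = sg R (s i) / Num.sqrt n%:R.
Proof. by rewrite /signvec mxE. Qed.

Lemma sg_sq (R : realType) b : sg R b ^+ 2 = 1.
Proof. by case: b; rewrite /sg ?sqrrN expr1n. Qed.

Lemma signvec_sq (R : realType) n (s : {ffun 'I_n -> bool}) i :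
  (0 < n)%N -> signvec R s i 0 ^+ 2 = n%:R^-1.
Proof.
move=> n0; rewrite signvecE expr_div_n sg_sq sqr_sqrtr ?ler0n // div1r //.
Qed.

Lemma signvec_sum (R : realType) n (s : {ffun 'I_n -> bool}) :
  (0 < n)%N -> \sum_i signvec R s i 0 ^+ 2 = 1.
Proof.
move=> n0; rewrite (eq_bigr (fun=> n%:R^-1)); last by move=> i _; rewrite signvec_sq.
rewrite sumr_const card_ord -[LHS]mulr_natr mulVf //.
by rewrite pnatr_eq0 -lt0n.
Qed.

Lemma signvec_prod (R : realType) n k (s : {ffun 'I_n -> bool}) :
  (0 < n)%N -> \prod_i (n%:R * signvec R s i 0 ^+ 2) ^+ k = 1.
Proof.
move=> n0; apply: big1 => i _; rewrite signvec_sq // mulfV ?expr1n //.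
by rewrite pnatr_eq0 -lt0n.
Qed.

Lemma qform_signvec (R : realType) n (e : rel 'I_n) (s : {ffun 'I_n -> bool}) :
  (0 < n)%N -> qform (QG R e) (signvec R s) =
   2^-1 * (1 - 3^-1 * (n%:R^-1 * \sum_i \sum_j (e i j)%:R * sg R (s i) * sg R (s j))).
Proof.
move=> n0; rewrite qformQG signvec_sum //; congr (_ * (_ - _ * _)).
rewrite mulr_sumr; apply: eq_bigr => i _; rewrite mulr_sumr; apply: eq_bigr => j _.
rewrite !signvecE.
have h : Num.sqrt n%:R ^+ 2 = n%:R :> R by rewrite sqr_sqrtr ?ler0n.
have hn : Num.sqrt n%:R != 0 :> R by rewrite sqrtr_eq0 -ltNge ltr0n.
move: h hn; set r := Num.sqrt n%:R => h hn; rewrite -h; field; done.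
Qed.

Lemma flip_sum (R : realType) n (i j : 'I_n) :
  i != j -> \sum_(s : {ffun 'I_n -> bool}) sg R (s i) * sg R (s j) = 0.
Proof.
move=> ij.
pose f (s : {ffun 'I_n -> bool}) : {ffun 'I_n -> bool} :=
  [ffun t => if t == i then ~~ s t else s t].
have fK : involutive f.
  by move=> s; apply/ffunP => t; rewrite !ffunE; case: (t == i) => //; rewrite negbK.
have H := @reindex_inj R +%R 0 _ f xpredT (fun s : {ffun 'I_n -> bool} => sg R (s i) * sg R (s j)) (can_inj fK).
rewrite /= in H.
have Hf s : sg R (f s i) * sg R (f s j) = - (sg R (s i) * sg R (s j)).
  have ji : (j == i) = false by rewrite eq_sym (negbTE ij).
  rewrite !ffunE eqxx ji.
  by case: (s i); case: (s j); rewrite /sg /=; ring.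
rewrite (eq_bigr _ (fun s _ => Hf s)) sumrN in H.
have : 2 * \sum_(s : {ffun 'I_n -> bool}) sg R (s i) * sg R (s j) = 0 by lra.
by move/eqP; rewrite mulf_eq0 pnatr_eq0 /= => /eqP.
Qed.

Lemma agm (R : realType) n (E : 'I_n -> R) :
  (forall i, 0 <= E i) -> \prod_i (n%:R * E i) <= (\sum_i E i) ^+ n.
Proof.
move=> E0.
have := @leif_AGM_scaled R _ predT E.
rewrite cardT size_enum_ord.
case=> [i _|H _]; first exact: mulrn_wge0.
apply: le_trans H; rewrite le_eqVlt; apply/orP; left; apply/eqP.
by apply: eq_bigr => i _; rewrite mulr_natl.
Qed.

Lemma sum_g (R : realType) n (e : rel 'I_n) : simple_graph e ->
  \sum_(s : {ffun 'I_n -> bool}) \sum_i \sum_j (e i j)%:R * sg R (s i) * sg R (s j) = 0.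
Proof.
move=> [_ irr]; rewrite exchange_big /=; apply: big1 => i _.
rewrite exchange_big /=; apply: big1 => j _.
under eq_bigr do rewrite -mulrA.
rewrite -mulr_sumr.
case: (eqVneq i j) => [<-|ij]; first by rewrite (negbTE (irr i)) mul0r.
by rewrite flip_sum // mulr0.
Qed.

Lemma maxcut_ge (R : realType) n (e : rel 'I_n) : (0 < n)%N -> simple_graph e ->
  2^-1 <= MaxCut R e.
Proof.
move=> n0 sge.
pose g (s : {ffun 'I_n -> bool}) := \sum_i \sum_j (e i j)%:R * sg R (s i) * sg R (s j).
have [s hs] : exists s, g s <= 0.
  case: (boolP [exists s, g s <= 0]) => [/existsP //|/existsPn H].
  have H' s : 0 < g s by rewrite ltNge H.
  have := @sum_g R _ _ sge; rewrite -/g (bigD1 [ffun=> true]) //=.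
  have := H' [ffun=> true].
  have : 0 <= \sum_(i | i != [ffun=> true]) g i by apply: sumr_ge0 => i _; apply: ltW.
  move=> a b c; rewrite /g in a b; exfalso; lra.
apply: le_trans (le_bigmax _ _ s).
rewrite qform_signvec // -/(g s).
have : 0 < n%:R^-1 :> R by rewrite invr_gt0 ltr0n.
move=> hn.
have : n%:R^-1 * g s <= 0 by rewrite mulr_ge0_le0 // ltW.
lra.
Qed.

Lemma maxcut_attained (R : realType) n (e : rel 'I_n) :
  exists s, MaxCut R e = qform (QG R e) (signvec R s).
Proof.
rewrite /MaxCut.
apply: (big_ind (fun y => exists s, y = qform (QG R e) (signvec R s))).
- by exists [ffun=> true].
- move=> x y [s1 ->] [s2 ->].
  by case: (leP (qform (QG R e) (signvec R s1)) (qform (QG R e) (signvec R s2))) => _; [exists s2|exists s1].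
- by move=> s _; exists s.
Qed.

Lemma ln2_ge (R : realType) : 2^-1 <= ln (2 : R).
Proof.
have := @le_ln1Dx R (- 2^-1) ltac:(lra).
have -> : 1 + - 2^-1 = (2 : R)^-1 by field.
rewrite lnV ?posrE //; lra.
Qed.

Lemma bern (R : realType) (t : R) m : 0 <= t -> 1 + m%:R * t <= (1 + t) ^+ m.
Proof.
move=> t0; elim: m => [|m IH]; first by rewrite mul0r addr0 expr0.
rewrite exprSr -natr1.
have : 0 <= (1 + t) ^+ m by apply: exprn_ge0; lra.
have : 0 <= m%:R :> R by apply: ler0n.
nra.
Qed.

Lemma key_num (R : realType) n k (d : R) : (0 < n)%N -> (0 < k)%N ->
  2 * ln 2 / k%:R <= d -> ((n%:R / (n%:R + d)) ^+ n) ^+ k <= 2^-1.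
Proof.
move=> n0 k0 hd.
have kpos : 0 < k%:R :> R by rewrite ltr0n.
have npos : 0 < n%:R :> R by rewrite ltr0n.
have hl := ln2_ge R.
have kd : 2 * ln 2 <= k%:R * d.
  by move: (hd); rewrite ler_pdivrMr // [d * _]mulrC.
have dpos : 0 < d.
  apply: lt_le_trans hd; apply: divr_gt0 => //; lra.
set a := 1 + d / n%:R.
have ha : n%:R / (n%:R + d) = a^-1.
  rewrite /a; field; apply/andP; split; lra.
rewrite ha exprVn exprVn.
have b1 : 1 + d <= a ^+ n.
  have := @bern R (d / n%:R) n (ltW (divr_gt0 dpos npos)).
  by rewrite mulrC divfK // gt_eqF.
have b2 : 1 + k%:R * d <= (1 + d) ^+ k by apply: bern; lra.
have b3 : (1 + d) ^+ k <= (a ^+ n) ^+ k.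
  by apply: lerXn2r; rewrite ?posrE ?nnegrE //; lra.
have b4 : 2 <= (a ^+ n) ^+ k by lra.
rewrite lef_pV2 ?posrE //; lra.
Qed.

Lemma norm2_sum (R : realType) n (x : 'cV[R]_n) :
  norm2 x = 1 -> \sum_i x i 0 ^+ 2 = 1.
Proof.
move=> h; rewrite -[LHS]sqr_sqrtr; first by rewrite -/(norm2 x) h expr1n.
by apply: sumr_ge0 => i _; apply: sqr_ge0.
Qed.

Lemma pG_split (R : realType) n k (e : rel 'I_n) (x : 'cV[R]_n) :
  pG k e x = qform (QG R e) x * (\prod_i (n%:R * x i 0 ^+ 2)) ^+ k.
Proof. by rewrite /pG prodrXl. Qed.

Lemma small_l1 (R : realType) n (e : rel 'I_n) k (d : R) (x : 'cV[R]_n) :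
  (0 < n)%N -> (0 < k)%N -> simple_graph e -> regular 3 e ->
  2 * ln 2 / k%:R <= d -> 0 <= d -> norm2 x = 1 ->
  norm1 x <= n%:R / Num.sqrt (n%:R + d) -> pG k e x <= 2^-1.
Proof.
move=> n0 k0 sge reg hd d0 hx hl1.
have hS := @norm2_sum R n x hx.
have hq : qform (QG R e) x <= 1 by rewrite -hS; apply: qform_le.
set P := \prod_i (n%:R * x i 0 ^+ 2).
have P0 : 0 <= P by apply: prodr_ge0 => i _; apply: mulr_ge0 => //; apply: sqr_ge0.
have npos : 0 < n%:R :> R by rewrite ltr0n.
have N0 : 0 <= norm1 x by apply: sumr_ge0 => i _.
have hagm := @agm R n (fun i => `|x i 0|) (fun i => normr_ge0 _).
have hsq : n%:R ^+ n * P <= (norm1 x ^+ n) ^+ 2.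
  have -> : n%:R ^+ n * P = (\prod_i (n%:R * `|x i 0|)) ^+ 2.
    have -> : n%:R ^+ n = \prod_(i < n) (n%:R : R) by rewrite prodr_const card_ord.
    rewrite -prodrXl /P -big_split /=.
    apply: eq_bigr => i _; by rewrite exprMn real_normK ?num_real // mulrA -expr2.
  apply: (@lerXn2r R 2); rewrite ?nnegrE //; last by apply: exprn_ge0.
  by apply: prodr_ge0 => i _; apply: mulr_ge0.
have heta : (n%:R / Num.sqrt (n%:R + d)) ^+ 2 = n%:R ^+ 2 / (n%:R + d).
  by rewrite expr_div_n sqr_sqrtr //; lra.
have h2 : (norm1 x ^+ n) ^+ 2 <= n%:R ^+ n * (n%:R / (n%:R + d)) ^+ n.
  rewrite -exprM mulnC exprM.
  apply: (@le_trans _ _ ((n%:R / Num.sqrt (n%:R + d)) ^+ 2 ^+ n)).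
    apply: (@lerXn2r R n); rewrite ?nnegrE //; try (apply: exprn_ge0 => //).
    apply: (@lerXn2r R 2); rewrite ?nnegrE //.
  by rewrite heta -exprMn mulrA -expr2.
have hP : P <= (n%:R / (n%:R + d)) ^+ n.
  by rewrite -(@ler_pM2l _ (n%:R ^+ n)) ?exprn_gt0 //; apply: le_trans h2.
rewrite pG_split -/P.
apply: le_trans (ler_piMl _ hq) _; first by apply: exprn_ge0.
apply: le_trans (@key_num R n k d n0 k0 hd).
apply: (@lerXn2r R k); rewrite ?nnegrE //.
apply: exprn_ge0; apply: divr_ge0 => //; lra.
Qed.

Lemma pG_le1 (R : realType) n (e : rel 'I_n) k (x : 'cV[R]_n) :
  simple_graph e -> regular 3 e -> norm2 x = 1 -> pG k e x <= 1.
Proof.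
move=> sge reg hx.
have hS := @norm2_sum R n x hx.
have hq : qform (QG R e) x <= 1 by rewrite -hS; apply: qform_le.
set P := \prod_i (n%:R * x i 0 ^+ 2).
have P0 : 0 <= P by apply: prodr_ge0 => i _; apply: mulr_ge0 => //; apply: sqr_ge0.
have P1 : P <= 1.
  have := @agm R n (fun i => x i 0 ^+ 2) (fun i => sqr_ge0 _).
  by rewrite hS expr1n.
rewrite pG_split -/P.
apply: le_trans (ler_piMl _ hq) _; first by apply: exprn_ge0.
exact: exprn_ile1.
Qed.

Lemma norm1_signvec (R : realType) n (s : {ffun 'I_n -> bool}) :
  norm1 (signvec R s) = n%:R / Num.sqrt n%:R.
Proof.
rewrite /norm1 (eq_bigr (fun=> (Num.sqrt n%:R)^-1)); last first.
  move=> i _; rewrite signvecE normrM normfV (ger0_norm (sqrtr_ge0 _)).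
  by case: (s i); rewrite /sg ?normrN normr1 mul1r.
by rewrite big_const_ord iter_addr addr0 -[LHS]mulr_natl.
Qed.

Lemma contM (R : realType) (T : topologicalType) (f g : T -> R) :
  continuous f -> continuous g -> continuous (fun x => f x * g x).
Proof. by move=> cf cg x; exact: (continuousM (cf x) (cg x)). Qed.

Lemma cont_prod (R : realType) (T : topologicalType) n (F : 'I_n -> T -> R) :
  (forall i, continuous (F i)) -> continuous (fun x => \prod_i F i x).
Proof.
move=> cF; elim: n F cF => [|n IH] F cF.
  by under eq_fun do rewrite big_ord0; exact: cst_continuous.
under eq_fun do rewrite big_ord_recr /=.
apply: contM; last exact: cF.
exact: (IH (fun i => F (widen_ord (leqnSn n) i))).
Qed.

Lemma pG_cont (R : realType) n (e : rel 'I_n) k :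
  continuous (fun v : 'rV[R]_n => pG k e v^T).
Proof.
have ci : forall i, continuous (fun v : 'rV[R]_n => (v^T) i 0).
  move=> i; have -> : (fun v : 'rV[R]_n => (v^T) i 0) = (fun v => v ord0 i).
    by apply: funext => v; rewrite mxE.
  exact: coord_continuous.
have -> : (fun v : 'rV[R]_n => pG k e v^T) = (fun v =>
   (\sum_i \sum_j (v^T) i 0 * QG R e i j * (v^T) j 0) *
    \prod_i (n%:R * (v^T) i 0 ^+ 2) ^+ k).
  by apply: funext => v; rewrite /pG qformE.
apply: contM.
  apply: (continuous_big (op := +%R)); first exact: add_continuous.
  move=> i _; apply: (continuous_big (op := +%R)); first exact: add_continuous.
  move=> j _; apply: contM; last exact: ci.
  apply: contM; last exact: cst_continuous.
  exact: ci.
apply: cont_prod => i w.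
apply: (@continuous_comp _ _ _ (fun w : 'rV[R]_n => n%:R * (w^T) i 0 ^+ 2) (fun r : R => r ^+ k)); last exact: exprn_continuous.
apply: contM; first exact: cst_continuous.
move=> u; apply: (@continuous_comp _ _ _ (fun w : 'rV[R]_n => (w^T) i 0) (fun r : R => r ^+ 2)); last exact: exprn_continuous.
exact: ci.
Qed.

Lemma sum_tr (R : realType) n (c : 'rV[R]_n) :
  \sum_i (c^T) i 0 ^+ 2 = \sum_i c ord0 i ^+ 2.
Proof. by apply: eq_bigr => i _; rewrite mxE. Qed.

Lemma sq_continuous (R : realType) n :
  continuous (fun v : 'rV[R]_n => \sum_i v ord0 i ^+ 2).
Proof.
apply: (continuous_big (op := +%R)); first exact: add_continuous.
move=> i _ x; apply: (@continuous_comp _ _ _ (fun v : 'rV[R]_n => v ord0 i) (fun r : R => r ^+ 2)).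
  exact: coord_continuous.
exact: exprn_continuous.
Qed.

Lemma sphere_attain (R : realType) n (f : 'rV[R]_n -> R) :
  continuous f -> (exists v : 'rV[R]_n, \sum_i v ord0 i ^+ 2 = 1) ->
  exists2 c : 'rV[R]_n, \sum_i c ord0 i ^+ 2 = 1 &
    forall t : 'rV[R]_n, \sum_i t ord0 i ^+ 2 = 1 -> f t <= f c.
Proof.
move=> cf [v0 hv0].
pose A := [set v : 'rV[R]_n | \sum_i v ord0 i ^+ 2 = 1].
have cA : compact A.
  apply: bounded_closed_compact.
    exists 1; split; first by rewrite num_real.
    move=> M M1 v Av.
    change (mx_norm v <= M); rewrite mx_normrE.
    idtac.
    apply/bigmax_leP; split => //=; first by apply: ltW; apply: lt_trans M1.
    move=> [i j] _ /=; rewrite (ord1 i) /=.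
    apply: (@le_trans _ _ 1); last exact: ltW.
    rewrite -(expr_le1 (n:=2)) //; rewrite real_normK ?num_real //.
    rewrite -Av (bigD1 j) //= lerDl; apply: sumr_ge0 => *; exact: sqr_ge0.
  have -> : A = (fun v : 'rV[R]_n => \sum_i v ord0 i ^+ 2) @^-1` [set x : R | x = 1] by [].
  apply: preimage_closed; last exact: closed_eq.
  by move=> v _; apply: sq_continuous.
have [||c cA' hc] := @compact_EVT_max _ R f A _ cA.
- by exists v0.
- by apply: continuous_subspaceT => x; apply: cf.
 exists c; first by rewrite inE in cA'.
by move=> t ht; apply: hc; rewrite inE.
Qed.

Theorem mainTheorem18 (R : realType) (n : nat) (e : rel 'I_n) (k : nat) (delta : R) :
  simple_graph e -> regular 3 e -> (0 < k)%N ->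
  2 * ln 2 / k%:R <= delta -> delta < n%:R ->
  let eta := n%:R / Num.sqrt (n%:R + delta) in
  (forall x : 'cV[R]_n, norm2 x = 1 -> norm1 x <= eta ->
     pG k e x <= MaxCut R e /\ MaxCut R e <= Opt R k e) /\
  (exists2 x : 'cV[R]_n, norm2 x = 1 /\ eta <= norm1 x & pG k e x = Opt R k e) /\
  (forall y : 'cV[R]_n, norm2 y = 1 -> eta <= norm1 y -> pG k e y <= Opt R k e).
Proof.
move=> sge reg k0 hd hdn eta.
have hl := ln2_ge R.
have kpos : 0 < k%:R :> R by rewrite ltr0n.
have dpos : 0 < delta.
  apply: lt_le_trans hd; apply: divr_gt0 => //; lra.
have n0 : (0 < n)%N by rewrite -(ltr0n R); lra.
pose S := [set pG k e x | x in [set x : 'cV[R]_n | norm2 x = 1]].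
have sv1 (s : {ffun 'I_n -> bool}) : norm2 (signvec R s) = 1.
  by rewrite /norm2 (@signvec_sum R n s n0) sqrtr1.
have pGs (s : {ffun 'I_n -> bool}) : pG k e (signvec R s) = qform (QG R e) (signvec R s).
  by rewrite /pG signvec_prod // mulr1.
have hsup : has_sup S.
  split; first by exists (pG k e (signvec R [ffun=> true])); exists (signvec R [ffun=> true]).
  exists 1 => _ [x hx <-]; exact: pG_le1.
have ub y : norm2 y = 1 -> pG k e y <= Opt R k e.
  by move=> hy; apply: sup_upper_bound => //; exists y.
have [s0 hs0] := @maxcut_attained R n e.
have mc_opt : MaxCut R e <= Opt R k e by rewrite hs0 -pGs; apply: ub.
have mc_ge := @maxcut_ge R n e n0 sge.
have small x : norm2 x = 1 -> norm1 x <= eta -> pG k e x <= MaxCut R e.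
  move=> hx hx1; apply: le_trans mc_ge.
  by apply: (@small_l1 R n e k delta x) => //; apply: ltW.
split; first by move=> x hx hx1; split; [exact: small|].
split; last by move=> y hy _; apply: ub.
have w0 : exists v : 'rV[R]_n, \sum_i v ord0 i ^+ 2 = 1.
  exists (signvec R s0)^T; rewrite -sum_tr trmxK.
  exact: (@norm2_sum R n _ (sv1 s0)).
have [c hc cmax] := @sphere_attain R n (fun v => pG k e v^T) (@pG_cont R n e k) w0.
have hxs : norm2 c^T = 1 by rewrite /norm2 sum_tr hc sqrtr1.
have hopt : Opt R k e = pG k e c^T.
  apply/eqP; rewrite eq_le ub // andbT.
  apply: ge_sup; first by case: hsup.
  move=> _ [y hy <-].
  have := cmax y^T; rewrite trmxK; apply.
  by rewrite -(@sum_tr R n y^T) trmxK; apply: norm2_sum.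
case: (leP (Opt R k e) (MaxCut R e)) => hcase.
  exists (signvec R s0); last by rewrite pGs -hs0; apply/eqP; rewrite eq_le hcase mc_opt.
  split => //; rewrite norm1_signvec /eta.
  apply: ler_wpM2l => //.
  rewrite lef_pV2 ?posrE ?sqrtr_gt0 ?ltr0n //; last lra.
  rewrite ler_sqrt; lra.
exists c^T => //; split => //.
rewrite leNgt; apply/negP => hlt.
have := small _ hxs (ltW hlt); rewrite -hopt; lra.
Qed.
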